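(* Let $m>n$ be positive integers and let $\sigma$ be a shuffle whose last entry is $\sigma(m')=n$, and $\lambda=\zeta(\sigma)$ (so $\lambda_1=m$). Then: (a) $\zeta(\overline\sigma)=\overline\lambda$. (b) Let $\alpha=\epsilon_i-\delta_j$ and suppose $i$ immediately precedes $j'$ in the one-line notation of $\sigma$. Let $r_\alpha(\sigma)=(i,j')\sigma$ be the shuffle obtained by interchanging $i$ and $j'$ in the one-line notation. Then $\overline{r_\alpha(\sigma)}=r_{\nu\alpha}(\overline\sigma)$, where $r_{\nu\alpha}(\overline\sigma)=(i+1,j')\overline\sigma$ (with $i+1$ read as $1$ if $i=n$).
   Context: Let $I=\{1,\dots,n\}\cup\{1',\dots,m'\}$ and for a permutation $w$ of $I$ its one-line notation is $(w(1),\dots,w(n),w(1'),\dots,w(m'))$ (positions ordered $1<\dots<n<1'<\dots<m'$). A shuffle is a permutation $\sigma$ of $I$ whose one-line notation contains $1,\dots,n$ and $1',\dots,m'$ each as subsequences in increasing order. $\zeta(\sigma)$ is the partition obtained as follows: draw a lattice path in an $n\times m$ rectangle from the top-left to the bottom-right corner whose $k$-th unit step is down if the $k$-th entry of the one-line notation is unprimed and right otherwise; $\zeta(\sigma)$ is the Young diagram of boxes below the path (row $\epsilon_i$, counted from the top, has $\lambda_{n+1-i}$ boxes). For $\lambda_1=m$, $\overline\lambda=(\lambda_2,\dots,\lambda_n,0)$. Let $\nu^{-1}$ be the permutation of $I$ with $\nu^{-1}(k)=k+1$ for $k\in[n-1]$, $\nu^{-1}(n)=1$, fixing primed elements; for $\sigma$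 with last entry $n$, $\overline\sigma$ is the shuffle with one-line notation $(1,\nu^{-1}\sigma(1),\dots,\nu^{-1}\sigma(n),\nu^{-1}\sigma(1'),\dots,\nu^{-1}\sigma((m-1)'))$, i.e. $1$ followed by $\nu^{-1}$ applied to the first $m+n-1$ entries of $\sigma$. $\nu(\epsilon_i-\delta_j)=\epsilon_{i+1}-\delta_j$ (indices of $\epsilon$ mod $n$ in $\{1,\dots,n\}$). *)

(* Defs.v *)
From mathcomp Require Import all_boot.
Set Implicit Arguments. Unset Strict Implicit. Unset Printing Implicit Defensive.

(* Elements of I = {1..n} u {1'..m'}: unprimed k is [inl k], primed j' is
   [inr j] (1-indexed, as in the paper). *)
Definition elt := (nat + nat)%type.

Definition is_unprimed (x : elt) : bool := if x is inl _ then true else false.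
Definition is_primed (x : elt) : bool := ~~ is_unprimed x.

(* A shuffle is represented by its one-line notation
   (w(1),...,w(n),w(1'),...,w(m')), which determines the permutation. *)
Definition is_shuffle (n m : nat) (s : seq elt) : bool :=
  [&& perm_eq s (map inl (iota 1 n) ++ map inr (iota 1 m)),
      subseq (map inl (iota 1 n)) s & subseq (map inr (iota 1 m)) s].

(* Lattice path: k-th step is down (true) iff k-th entry is unprimed. *)
Definition lpath (s : seq elt) : seq bool := map is_unprimed s.

Definition downs_before (p : seq bool) (k : nat) : nat := count id (take k p).

(* Number of boxes below the path in row r (0-indexed from the top) of the
   rectangle: the box in row r, column c lies below the path iff the
   (c+1)-th right step is taken at height (number of previous down steps) <= r. *)
Definition row_len (p : seq bool) (r : nat) : nat :=
  count (fun k => ~~ nth true p k && (downs_before p k <= r)) (iota 0 (size p)).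

(* zeta(sigma) = (lambda_1, ..., lambda_n), where row eps_i (1-indexed from
   the top) has lambda_(n+1-i) boxes, i.e. lambda_k is row n-k (0-indexed). *)
Definition zeta (n : nat) (s : seq elt) : seq nat :=
  [seq row_len (lpath s) (n - k) | k <- iota 1 n].

Definition lbar (l : seq nat) : seq nat := behead l ++ [:: 0].

Definition nuinv (n : nat) (x : elt) : elt :=
  match x with
  | inl k => inl (if k == n then 1 else k.+1)
  | inr j => inr j
  end.

Definition sbar (n m : nat) (s : seq elt) : seq elt :=
  inl 1 :: map (nuinv n) (take (m + n - 1) s).

(* A root eps_i - delta_j is represented by the pair (i, j). *)
Definition nu_root (n : nat) (a : nat * nat) : nat * nat :=
  ((if a.1 == n then 1 else a.1.+1), a.2).

Definition transp (x y z : elt) : elt :=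
  if z == x then y else if z == y then x else z.

(* r_alpha(sigma) = (i, j') sigma : one-line notation of the composite, i.e.
   the transposition applied to every entry of the one-line notation. *)
Definition r_root (a : nat * nat) (s : seq elt) : seq elt :=
  map (transp (inl a.1) (inr a.2)) s.

(* Main.v *)
Require Import Defs.
From mathcomp Require Import all_boot.

Lemma row_len_rcons q r : row_len (rcons q true) r = row_len q r.
Proof.
rewrite /row_len size_rcons -addn1 iotaD add0n /= count_cat /= nth_rcons ltnn eqxx /=; rewrite [X in X = _]addn0.
apply: eq_in_count => k; rewrite mem_iota add0n => /andP[_ hk].
by rewrite nth_rcons hk /downs_before -cats1 takel_cat // ltnW.
Qed.

Lemma row_len_cons q r : row_len (true :: q) r = count (fun k => ~~ nth true q k && (downs_before q k < r)) (iota 0 (size q)).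
Proof.
rewrite /row_len /=.
have -> : iota 1 (size q) = map (addn 1) (iota 0 (size q)) by rewrite -iotaDl.
by rewrite count_map.
Qed.
Lemma row_len_cons0 q : row_len (true :: q) 0 = 0.
Proof. by rewrite row_len_cons; apply/eqP; rewrite -leqn0 leqn0 eqn0Ngt -has_count; apply/hasPn => k; rewrite ltn0 andbF. Qed.
Lemma row_len_consS q r : row_len (true :: q) r.+1 = row_len q r.
Proof. by rewrite row_len_cons. Qed.

Lemma nuinv_transp n i j x : 0 < i -> i != n ->
  nuinv n (transp (inl i) (inr j) x) = transp (inl (if i == n then 1 else i.+1)) (inr j) (nuinv n x).
Proof.
move=> i0 /negbTE hin; rewrite hin /transp.
case: x => [k|k] /=; repeat (case: eqP => //=); rewrite ?hin //; try congruence.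
all: move=> *; try congruence.
all: repeat match goal with H: inl _ = inl _ |- _ => case: H => H end; subst.
all: try by rewrite eqxx in hin.
all: by [].
Qed.

Theorem lemma3p5 (n m : nat) (s : seq elt) :
  0 < n -> n < m ->
  is_shuffle n m s ->
  last (inr 0) s = inl n ->
  (* (a) *)
  zeta n (sbar n m s) = lbar (zeta n s) /\
  (* (b) *)
  (forall i j : nat, 1 <= i <= n -> 1 <= j <= m ->
     infix [:: inl i; inr j] s ->
     sbar n m (r_root (i, j) s) = r_root (nu_root n (i, j)) (sbar n m s)).
Proof.
move=> n0 nm /and3P[hp _ _] hl.
have hsz : size s = n + m by rewrite (perm_size hp) size_cat !size_map !size_iota.
have hu : uniq s.
  rewrite (perm_uniq hp) cat_uniq !map_inj_uniq ?iota_uniq //; last by move=> ? ? [].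
  - rewrite /= andbT; apply/hasPn => x /mapP[y _ ->]; apply/mapP => -[z _] //.
  - by move=> ? ? [].
case/lastP: s hsz hl hu hp => [|s' x]; first by [].
rewrite last_rcons size_rcons => hsz -> hu hp.
have hs' : size s' = m + n - 1 by rewrite addnC -hsz subn1.
have htake : take (m + n - 1) (rcons s' (inl n)) = s'.
  by rewrite -cats1 -hs' takel_cat // take_size.
split.
- rewrite /sbar htake /zeta /lbar.
  have -> : lpath (inl 1 :: map (nuinv n) s') = true :: lpath s'.
    by rewrite /lpath /= -map_comp; congr (_ :: _); apply: eq_map => -[].
  have -> : lpath (rcons s' (inl n)) = rcons (lpath s') true by rewrite /lpath map_rcons.
  case: n n0 nm {hp hu hsz hs' htake} => // n _ _.
  rewrite (eq_map (fun k => row_len_rcons (lpath s') (n.+1 - k))).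
  apply: (@eq_from_nth _ 0).
    by rewrite size_cat size_behead !size_map size_iota /= addn1.
  rewrite size_map size_iota => t ht.
  rewrite (nth_map 0) ?size_iota // nth_iota // add1n subSS.
  rewrite nth_cat size_behead size_map size_iota /=.
  case: (ltnP t n) => htn.
    rewrite (nth_map 0) ?size_iota // nth_iota // -(subnSK htn) row_len_consS addSn add1n subSS.
    by [].
  have -> : t = n by apply/eqP; rewrite eqn_leq htn -ltnS ht.
  by rewrite subnn row_len_cons0.
- move=> i j /andP[i1 _] _ /infixP[a [b hab]].
  have hin : i != n.
    apply/eqP => ein; subst i.
    have hl : last (inr 0) (rcons s' (inl n)) = inl n by rewrite last_rcons.
    move: hu hl; rewrite hab /= cat_uniq /= => /and5P[_ _ hnot _ _].
    rewrite last_cat /= => hl.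
    by move: hnot; rewrite -hl mem_last.
  rewrite /sbar /r_root /nu_root /= map_take -map_comp.
  congr (_ :: _).
    rewrite /transp (negbTE hin).
    have -> : (inl 1 == inl i.+1 :> elt) = false by apply/eqP => -[] ei; rewrite -ei in i1.
    by [].
  rewrite -map_take htake -map_comp; apply: eq_map => y /=.
  by rewrite (nuinv_transp _ _ _ _ i1 hin).
Qed.
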